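(* If $n$ is a positive integer that is non-composite ($n=1$ or $n$ prime), then \[ Z(2n-1)\equiv 0\pmod{n}, \] where $Z(m)=\sum_{k=0}^{m-1}\frac{1+(-1)^{k}k!(m-k-1)!}{m}$. *)

(* Defs.v *)
From mathcomp Require Import all_boot all_order all_algebra.
Set Implicit Arguments. Unset Strict Implicit. Unset Printing Implicit Defensive.
Import Order.TTheory GRing.Theory Num.Theory.
Local Open Scope ring_scope.

Definition Z (m : nat) : rat :=
  \sum_(k < m) (1 + (-1) ^+ k * (k`!)%:R * ((m - k - 1)`!)%:R) / m%:R.

(* Main.v *)
Require Import Defs.
From mathcomp Require Import all_boot all_order all_algebra.
From mathcomp Require Import zify ring.
Import Order.TTheory GRing.Theory Num.Theory.
Lemma ffmod n a k : k <= a -> (a + n) ^_ k = a ^_ k %[mod n].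
Proof.
elim: k a => [|k IH] [|a] //= hk.
rewrite addSn !ffactSS -modnMm IH // -addSn modnDr modnMm //.
Qed.
Lemma keymod p : prime p.+1 -> 0 < p ->
  p.+1 %| (p`! * (2 * p) ^_ p.-1).+1.
Proof.
move=> pr hp.
have W : p.+1 %| p`!.+1 by rewrite -(Wilson (hp : 1 < p.+1)) ?pr //.
have F : (2 * p) ^_ p.-1 = (p.-1)`! %[mod p.+1].
  have -> : 2 * p = p.-1 + p.+1 by lia.
  by rewrite ffmod // ffactnn.
have E : (p`! * (2 * p) ^_ p.-1).+1 = (p`! * (p.-1)`!).+1 %[mod p.+1].
  by rewrite -!(addn1 (_ * _)) -modnDml -modnMmr F modnMmr modnDml.
rewrite /dvdn E -/(dvdn _ _).
have Fp : p`! = p * (p.-1)`! by rewrite -{1}(prednK hp) factS prednK.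
have I : (p`! * (p.-1)`!).+1 + (p.-1)`! * p.+1 = (p.-1)`! * p`!.+1 + p`!.+1.
  rewrite Fp; ring.
rewrite -(dvdn_addl _ (dvdn_mull (p.-1)`! (dvdnn p.+1))) I.
by rewrite dvdn_add // dvdn_mull.
Qed.

Lemma natid N k : k <= N ->
  N.+2 * (k`! * (N-k)`!) = k`! * (N.+1-k)`! + k.+1`! * (N-k)`!.
Proof.
move=> hk. rewrite subSn // factS factS.
move: (k`!) ((N-k)`!) => a b.
have -> : N = (N - k) + k by rewrite subnK.
rewrite addnK. move: (N - k) => d. ring.
Qed.
Local Open Scope ring_scope.

Lemma tele (R : comNzRingType) N :
  (N.+2)%:R * \sum_(k < N.+1) ((-1)^+k * (k`!)%:R * ((N-k)`!)%:R)
  = ((N.+1)`!)%:R * (1 + (-1)^+N) :> R.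
Proof.
rewrite mulr_sumr -(big_mkord xpredT (fun k => (N.+2)%:R * ((-1)^+k * (k`!)%:R * ((N-k)`!)%:R) : R)).
rewrite (telescope_sumr_eq (fun k => - ((-1)^+k * ((k`! * (N.+1-k)`!)%:R)) : R)) //.
  rewrite subn0 subnn fact0 /= !muln1 mul1n expr0 mul1r exprS; ring.
move=> k /andP [_ hk]. rewrite ltnS in hk.
rewrite exprS subSS.
have := @natid N k hk => /(congr1 (fun x => x%:R : R)).
rewrite natrD !natrM => e.
rewrite ?natrM.
transitivity ((-1) ^+ k * (N.+2%:R * (k`!%:R * (N - k)`!%:R)) : R); first ring.
rewrite e. ring.
Qed.

Theorem mainTheorem10 (n : nat) :
  (0 < n)%N -> (n = 1%N \/ prime n) ->
  exists z : int, Z (2 * n - 1) = z%:~R /\ (n%:Z %| z)%Z.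
Proof.
case: n => [//|p] _ hn.
have hm : (2 * p.+1 - 1 = (2 * p).+1)%N by lia.
have hd : (p.+1 %| (2 * p)`!)%N.
  case: p hn {hm} => [|p] hn; first by rewrite dvd1n.
  by apply: dvdn_fact; lia.
set q := ((2 * p)`! %/ p.+1)%N.
have hq : ((2 * p)`! = q * p.+1)%N by rewrite divnK.
exists (q.+1)%:Z; split; last first.
  case: (posnP p) => [->|hp]; first by rewrite dvd1z.
  have pr : prime p.+1 by case: hn => // -[] e; rewrite e in hp.
  have hq2 : q = (p`! * (2 * p) ^_ p.-1)%N.
    have le : (p.-1 <= 2 * p)%N by lia.
    have e := ffact_fact le.
    have e2 : (2 * p - p.-1 = p.+1)%N by lia.
    rewrite e2 factS in e.
    apply/eqP; rewrite -(eqn_pmul2r (ltn0Sn p)) -hq -e; apply/eqP.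
    move: (p`!) ((2 * p) ^_ p.-1) => a b; ring.
  rewrite hq2; have K := @keymod p pr hp; by rewrite /dvdz unfold_in /= ?absz_nat.
rewrite /Z hm -mulr_suml big_split /= sumr_const card_ord.
have eT : \sum_(k < (2 * p).+1) ((-1) ^+ k * k`!%:R * ((2 * p).+1 - k - 1)`!%:R)
   = \sum_(k < (2 * p).+1) ((-1) ^+ k * k`!%:R * ((2 * p) - k)`!%:R) :> rat.
  by apply: eq_bigr => k _; have -> : ((2 * p).+1 - k - 1 = 2 * p - k)%N by lia.
rewrite eT.
have tl := tele rat (2 * p).
rewrite exprM sqrrN expr1n in tl.
have eT2 : \sum_(k < (2 * p).+1) ((-1) ^+ k * k`!%:R * ((2 * p) - k)`!%:R)
   = ((2 * p).+1 * q)%:R :> rat.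
  apply: (@mulfI _ ((2 * p).+2)%:R); first by rewrite pnatr_eq0.
  rewrite tl factS hq; change (1 + 1 : rat) with (2%:R : rat); rewrite -!natrM; congr (_%:R).
  lia.
rewrite eT2 -natrD -mulnS natrM mulrC mulKf ?pnatr_eq0 //.
Qed.
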